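(* Let $\mathcal{C}$ be a periodic cylinder of $\Phi$ and $\mathcal{C}^{-1}$ its reversed cylinder. Then $\mathcal{C}$ is $\lambda^-$-stable if and only if $\mathcal{C}^{-1}$ is $\lambda^+$-stable.
   Context: Let $P$ be a simply connected polygon in $\mathbb{R}^2$ with $d$ sides, labeled $1,\dots,d$, with $\partial P$ oriented anticlockwise. The billiard map $\Phi$ acts on unit vectors $(x,v)$ with $x\in\partial P$ and $v$ pointing into $P$: $\Phi(x,v)=(\bar x,\bar v)$, where $\bar x$ is the first point at which the ray from $x$ in direction $v$ meets $\partial P$ and $\bar v$ is the inward vector obtained by reflecting $v$ in the side containing $\bar x$. Vectors based at vertices, and vectors whose image would be based at a vertex, are excluded; the remaining domain is $M'$. Points of $M'$ have coordinates $(s,\theta)$, $s$ the arc-length parameter of $x$ on $\partial P$, $\theta\in(-\pi/2,\pi/2)$ the oriented angle between $v$ and the inward normal at $x$. $\Sigma_{i,j}$ is the set of $(s,\theta)\in M'$ with $x$ on side $i$ and $\bar x$ on side $j$. For $\lambda>0$ let $R_\lambda(s,\theta)=(s,\lambda\theta)$ and $\Phi_\lambda:=R_\lambda\circ\Phi$ (pinball billiard map for $\lambda\neq1$). The itinerary of an orbit $(s_k,\theta_k)$ is the sequence $(i_k)$ with $(s_k,\theta_k)\in\Sigma_{i_k,i_{k+1}}$. Every periodic orbit of $\Phi$ lies in a periodic cylinder: a maximal one-parameter family of parallel periodic orbits of $\Phi$ with the same itinerary. Let $S(s,\theta)=(s,-\theta)$; the reversed cylinder $\mathcal{C}^{-1}$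 of $\mathcal{C}$ is the periodic cylinder obtained by applying $S$ to $\mathcal{C}$ (time reversal). A periodic orbit $q$ of $\Phi$ is $\lambda^{+}$-stable (resp. $\lambda^-$-stable) if there exist a strictly decreasing (resp. strictly increasing) sequence $\lambda_n\to1$ and, for each $n$, a periodic orbit $q_n$ of $\Phi_{\lambda_n}$ with the same itinerary as $q$ such that $q_n\to q$. A periodic cylinder is $\lambda^\pm$-stable if it contains a $\lambda^\pm$-stable periodic orbit. *)

(* Defs.v *)
From Stdlib Require Import Reals Lra Lia.
Open Scope R_scope.

Definition pt := (R * R)%type.
Definition vadd (a b : pt) : pt := (fst a + fst b, snd a + snd b).
Definition vsub (a b : pt) : pt := (fst a - fst b, snd a - snd b).
Definition vscal (c : R) (a : pt) : pt := (c * fst a, c * snd a).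
Definition dot (a b : pt) : R := fst a * fst b + snd a * snd b.
Definition cross (a b : pt) : R := fst a * snd b - snd a * fst b.
Definition vnorm (a : pt) : R := sqrt (dot a a).

(* Polygon with d sides given by vertices V 0, ..., V (d-1); side i (0 <= i < d)
   goes from V i to V (nxt d i). (The paper labels sides 1..d.) *)
Definition nxt (d i : nat) : nat := Nat.modulo (S i) d.

Definition seg (a b y : pt) : Prop :=
  exists u, 0 <= u <= 1 /\ y = vadd a (vscal u (vsub b a)).

Definition side_seg (d : nat) (V : nat -> pt) (i : nat) (y : pt) : Prop :=
  seg (V i) (V (nxt d i)) y.

Definition on_boundary (d : nat) (V : nat -> pt) (y : pt) : Prop :=
  exists i, (i < d)%nat /\ side_seg d V i y.

(* Simply connected (= simple) polygon with d sides, boundary oriented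
   anticlockwise (positive signed area). *)
Definition simple_polygon (d : nat) (V : nat -> pt) : Prop :=
  (3 <= d)%nat /\
  (forall i, (i < d)%nat -> V i <> V (nxt d i)) /\
  (forall i, (i < d)%nat ->
     cross (vsub (V (nxt d i)) (V i)) (vsub (V (nxt d (nxt d i))) (V (nxt d i))) <> 0) /\
  (forall i j y, (i < d)%nat -> (j < d)%nat -> i <> j ->
     side_seg d V i y -> side_seg d V j y ->
     (j = nxt d i /\ y = V j) \/ (i = nxt d j /\ y = V i)) /\
  0 < sum_f_R0 (fun i => cross (V i) (V (nxt d i))) (d - 1).

Definition side_len (d : nat) (V : nat -> pt) (i : nat) : R :=
  vnorm (vsub (V (nxt d i)) (V i)).

(* arc-length coordinate of vertex i: sigma i = sum of lengths of sides < i *)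
Fixpoint sigma (d : nat) (V : nat -> pt) (i : nat) : R :=
  match i with
  | O => 0
  | S k => sigma d V k + side_len d V k
  end.

Definition side_of (d : nat) (V : nat -> pt) (s : R) (i : nat) : Prop :=
  (i < d)%nat /\ sigma d V i < s < sigma d V (S i).

Definition pos (d : nat) (V : nat -> pt) (i : nat) (s : R) : pt :=
  vadd (V i) (vscal ((s - sigma d V i) / side_len d V i) (vsub (V (nxt d i)) (V i))).

(* unit tangent of side i and inward (left, since anticlockwise) unit normal *)
Definition tang (d : nat) (V : nat -> pt) (i : nat) : pt :=
  vscal (/ side_len d V i) (vsub (V (nxt d i)) (V i)).
Definition inormal (d : nat) (V : nat -> pt) (i : nat) : pt :=
  (- snd (tang d V i), fst (tang d V i)).

(* unit vector at side i making oriented angle theta with the inward normal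
   (the normal rotated anticlockwise by theta) *)
Definition dirv (d : nat) (V : nat -> pt) (i : nat) (theta : R) : pt :=
  vadd (vscal (cos theta) (inormal d V i)) (vscal (- sin theta) (tang d V i)).

Definition reflect (d : nat) (V : nat -> pt) (j : nat) (v : pt) : pt :=
  vsub v (vscal (2 * dot v (inormal d V j)) (inormal d V j)).

(* The billiard map Phi, as a (functional) relation on coordinates (s,theta).
   Its domain is M'. *)
Definition Phi (d : nat) (V : nat -> pt) (p q : pt) : Prop :=
  exists i j tau,
    side_of d V (fst p) i /\ - (PI / 2) < snd p < PI / 2 /\
    side_of d V (fst q) j /\ 0 < tau /\
    pos d V j (fst q) = vadd (pos d V i (fst p)) (vscal tau (dirv d V i (snd p))) /\
    (forall tau', 0 < tau' < tau ->
       ~ on_boundary d V (vadd (pos d V i (fst p)) (vscal tau' (dirv d V i (snd p))))) /\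
    - (PI / 2) < snd q < PI / 2 /\
    dirv d V j (snd q) = reflect d V j (dirv d V i (snd p)).

Definition inM' (d : nat) (V : nat -> pt) (p : pt) : Prop := exists q, Phi d V p q.

(* pinball billiard map Phi_lambda = R_lambda o Phi *)
Definition Phi_lam (d : nat) (V : nat -> pt) (lam : R) (p q : pt) : Prop :=
  exists q', Phi d V p q' /\ q = (fst q', lam * snd q').

Definition is_orbit (F : pt -> pt -> Prop) (p : pt) (o : nat -> pt) : Prop :=
  o O = p /\ forall k, F (o k) (o (S k)).

Definition periodic (F : pt -> pt -> Prop) (p : pt) : Prop :=
  exists o, is_orbit F p o /\ exists N, (0 < N)%nat /\ o N = p.

Definition same_itin (d : nat) (V : nat -> pt) (o o' : nat -> pt) : Prop :=
  forall k i, side_of d V (fst (o k)) i <-> side_of d V (fst (o' k)) i.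

Definition lam_plus_stable_pt (d : nat) (V : nat -> pt) (p : pt) : Prop :=
  periodic (Phi d V) p /\
  exists (lam : nat -> R) (q : nat -> pt),
    (forall n, lam (S n) < lam n) /\ (forall n, 0 < lam n) /\ Un_cv lam 1 /\
    Un_cv (fun n => fst (q n)) (fst p) /\ Un_cv (fun n => snd (q n)) (snd p) /\
    forall n, periodic (Phi_lam d V (lam n)) (q n) /\
      exists o o', is_orbit (Phi d V) p o /\ is_orbit (Phi_lam d V (lam n)) (q n) o' /\
                   same_itin d V o o'.

Definition lam_minus_stable_pt (d : nat) (V : nat -> pt) (p : pt) : Prop :=
  periodic (Phi d V) p /\
  exists (lam : nat -> R) (q : nat -> pt),
    (forall n, lam n < lam (S n)) /\ (forall n, 0 < lam n) /\ Un_cv lam 1 /\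
    Un_cv (fun n => fst (q n)) (fst p) /\ Un_cv (fun n => snd (q n)) (snd p) /\
    forall n, periodic (Phi_lam d V (lam n)) (q n) /\
      exists o o', is_orbit (Phi d V) p o /\ is_orbit (Phi_lam d V (lam n)) (q n) o' /\
                   same_itin d V o o'.

(* Periodic cylinder, as a subset of M' (the union of its orbits): the orbits
   through the points (s, theta0), s ranging over the connected component
   containing s0 of the set of s such that (s,theta0) is Phi-periodic with the
   same itinerary as (s0,theta0).  (Parallel orbits with the same itinerary
   = same initial side and same initial angle.) *)
Definition cyl_good (d : nat) (V : nat -> pt) (s0 theta0 s : R) : Prop :=
  periodic (Phi d V) (s, theta0) /\
  exists o o', is_orbit (Phi d V) (s0, theta0) o /\ is_orbit (Phi d V) (s, theta0) o' /\
               same_itin d V o o'.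

Definition is_periodic_cylinder (d : nat) (V : nat -> pt) (C : pt -> Prop) : Prop :=
  exists s0 theta0,
    periodic (Phi d V) (s0, theta0) /\
    forall p, C p <->
      exists s o k,
        (forall r, Rmin s s0 <= r <= Rmax s s0 -> cyl_good d V s0 theta0 r) /\
        is_orbit (Phi d V) (s, theta0) o /\ p = o k.

(* reversed cylinder: image under S(s,theta) = (s,-theta) *)
Definition reversed (C : pt -> Prop) : pt -> Prop := fun p => C (fst p, - snd p).

Definition cyl_plus_stable (d : nat) (V : nat -> pt) (C : pt -> Prop) : Prop :=
  exists p, C p /\ lam_plus_stable_pt d V p.
Definition cyl_minus_stable (d : nat) (V : nat -> pt) (C : pt -> Prop) : Prop :=
  exists p, C p /\ lam_minus_stable_pt d V p.

(* Main.v *)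
Require Import Defs.
From Stdlib Require Import Reals Lra Lia Psatz.
Open Scope R_scope.
Import Defs.

Lemma side_len_pos d V i : V i <> V (nxt d i) -> 0 < side_len d V i.
Proof.
  intro H. unfold side_len, vnorm, dot, vsub. destruct (V i) as [a b], (V (nxt d i)) as [c e]; simpl.
  apply sqrt_lt_R0.
  destruct (Req_dec c a); destruct (Req_dec e b); try nra.
  subst. exfalso. apply H. reflexivity.
Qed.

Lemma tang_unit d V i : V i <> V (nxt d i) ->
  fst (tang d V i) * fst (tang d V i) + snd (tang d V i) * snd (tang d V i) = 1.
Proof.
  intro H. pose proof (side_len_pos d V i H) as HL.
  unfold tang, side_len, vnorm, dot, vsub, vscal in *. destruct (V i) as [a b], (V (nxt d i)) as [c e]; simpl in *.
  set (q := (c - a) * (c - a) + (e - b) * (e - b)) in *.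
  assert (Hq : 0 <= q) by (unfold q; pose proof (Rle_0_sqr (c-a)); pose proof (Rle_0_sqr (e-b)); unfold Rsqr in *; lra).
  pose proof (sqrt_sqrt q Hq).
  set (L := sqrt q) in *.
  transitivity (/ L * / L * q). unfold q; ring.
  rewrite <- H0. field. lra.
Qed.

Lemma sigma_mono d V i k : sigma d V i <= sigma d V (i + k).
Proof.
  induction k. rewrite Nat.add_0_r; lra.
  rewrite Nat.add_succ_r. simpl. unfold side_len, vnorm. pose proof (sqrt_pos (dot (vsub (V (nxt d (i + k)%nat)) (V (i + k)%nat)) (vsub (V (nxt d (i + k)%nat)) (V (i + k)%nat)))). lra.
Qed.

Lemma side_of_unique d V s i j : side_of d V s i -> side_of d V s j -> i = j.
Proof.
  unfold side_of; intros [_ [H1 H2]] [_ [H3 H4]].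
  destruct (Nat.lt_trichotomy i j) as [h|[h|h]]; auto; exfalso.
  - pose proof (sigma_mono d V (S i) (j - S i)). replace (S i + (j - S i))%nat with j in H by lia. lra.
  - pose proof (sigma_mono d V (S j) (i - S j)). replace (S j + (i - S j))%nat with i in H by lia. lra.
Qed.

Lemma side_len_eq d V i : side_len d V i = sigma d V (S i) - sigma d V i.
Proof. simpl. ring. Qed.

Lemma pos_on d V i s : side_of d V s i -> on_boundary d V (pos d V i s).
Proof.
  intros [Hi Hs]. exists i. split; auto. unfold side_seg, seg, pos.
  exists ((s - sigma d V i) / side_len d V i). split; auto.
  rewrite side_len_eq. split.
  - apply Rmult_le_pos; [lra|]. left. apply Rinv_0_lt_compat. lra.
  - apply Rmult_le_reg_r with (sigma d V (S i) - sigma d V i); [lra|].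
    unfold Rdiv. rewrite Rmult_assoc, Rinv_l; lra.
Qed.

Lemma u_range d V i s : side_of d V s i ->
  0 < (s - sigma d V i) / side_len d V i < 1.
Proof.
  intros [Hi Hs]. rewrite side_len_eq. split.
  - apply Rdiv_lt_0_compat; lra.
  - apply Rmult_lt_reg_r with (sigma d V (S i) - sigma d V i); [lra|].
    unfold Rdiv. rewrite Rmult_assoc, Rinv_l; lra.
Qed.

Lemma pair_neq (a b c e : R) : (a, b) <> (c, e) -> a <> c \/ b <> e.
Proof. intros H. destruct (Req_dec a c); destruct (Req_dec b e); subst; auto. Qed.

Lemma pos_not_vertex d V i s : V i <> V (nxt d i) -> side_of d V s i ->
  pos d V i s <> V i /\ pos d V i s <> V (nxt d i).
Proof.
  intros Hv Hs. pose proof (u_range d V i s Hs) as Hu. unfold pos in *.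
  set (u := (s - sigma d V i) / side_len d V i) in *.
  unfold vadd, vscal, vsub.
  destruct (V i) as [a b], (V (nxt d i)) as [c e]; simpl.
  apply pair_neq in Hv.
  split; intro H; injection H; intros; destruct Hv; nra.
Qed.

Lemma pos_inj d V i s1 s2 : V i <> V (nxt d i) -> side_of d V s1 i -> side_of d V s2 i ->
  pos d V i s1 = pos d V i s2 -> s1 = s2.
Proof.
  intros Hv H1 H2 H. pose proof (side_len_pos d V i Hv) as HL. unfold pos in H.
  assert (Hu : (s1 - sigma d V i) / side_len d V i = (s2 - sigma d V i) / side_len d V i).
  { unfold vadd, vscal, vsub in H.
    destruct (V i) as [a b], (V (nxt d i)) as [c e]; simpl in H.
    apply pair_neq in Hv. injection H; intros.
    destruct Hv as [h|h].
    - apply Rmult_eq_reg_r with (r := c - a); lra.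
    - apply Rmult_eq_reg_r with (r := e - b); lra. }
  unfold Rdiv in Hu. apply Rmult_eq_reg_r in Hu. lra. apply Rgt_not_eq, Rinv_0_lt_compat; lra.
Qed.

Lemma dirv_coord d V i th : dirv d V i th =
  (cos th * (- snd (tang d V i)) + - sin th * fst (tang d V i),
   cos th * fst (tang d V i) + - sin th * snd (tang d V i)).
Proof. reflexivity. Qed.

Lemma reflect_coord d V j (w : pt) : reflect d V j w =
  (fst w - 2 * (fst w * - snd (tang d V j) + snd w * fst (tang d V j)) * - snd (tang d V j),
   snd w - 2 * (fst w * - snd (tang d V j) + snd w * fst (tang d V j)) * fst (tang d V j)).
Proof. reflexivity. Qed.

Lemma dirv_inj d V i t1 t2 : V i <> V (nxt d i) ->
  - (PI/2) < t1 < PI/2 -> - (PI/2) < t2 < PI/2 -> dirv d V i t1 = dirv d V i t2 -> t1 = t2.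
Proof.
  intros Hv H1 H2 H. pose proof (tang_unit d V i Hv) as Hu.
  rewrite !dirv_coord in H. destruct (tang d V i) as [a b]; simpl in *.
  injection H; intros E2 E1.
  apply sin_inj; try lra.
  assert (E : (cos t1 * - b + - sin t1 * a) * a + (cos t1 * a + - sin t1 * b) * b =
              (cos t2 * - b + - sin t2 * a) * a + (cos t2 * a + - sin t2 * b) * b) by (rewrite E1, E2; ring).
  replace ((cos t1 * - b + - sin t1 * a) * a + (cos t1 * a + - sin t1 * b) * b) with (- sin t1 * (a*a+b*b)) in E by ring.
  replace ((cos t2 * - b + - sin t2 * a) * a + (cos t2 * a + - sin t2 * b) * b) with (- sin t2 * (a*a+b*b)) in E by ring.
  rewrite Hu in E. lra.
Qed.

Lemma revA d V j th (w : pt) : V j <> V (nxt d j) ->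
  dirv d V j th = reflect d V j w -> dirv d V j (- th) = (- fst w, - snd w).
Proof.
  intros Hv H. pose proof (tang_unit d V j Hv) as Hu.
  rewrite dirv_coord, reflect_coord in H. rewrite dirv_coord, cos_neg, sin_neg.
  destruct (tang d V j) as [a b]; destruct w as [w1 w2]; simpl in *.
  injection H; intros E2 E1.
  set (k := w1 * - b + w2 * a) in *.
  set (c := cos th) in *. set (s := sin th) in *.
  assert (Hc : c = - k).
  { assert (X : (c * - b + - s * a) * - b + (c * a + - s * b) * a = (w1 - 2 * k * - b) * - b + (w2 - 2 * k * a) * a) by (rewrite E1, E2; reflexivity).
    replace ((c * - b + - s * a) * - b + (c * a + - s * b) * a) with (c * (a*a+b*b)) in X by ring.
    replace ((w1 - 2 * k * - b) * - b + (w2 - 2 * k * a) * a) with (k - 2 * k * (a*a+b*b)) in X by (unfold k; ring).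
    rewrite Hu in X. lra. }
  f_equal; nra.
Qed.

Lemma revB d V i th : V i <> V (nxt d i) ->
  dirv d V i (- th) = reflect d V i (- fst (dirv d V i th), - snd (dirv d V i th)).
Proof.
  intros Hv. pose proof (tang_unit d V i Hv) as Hu.
  rewrite reflect_coord, !dirv_coord, cos_neg, sin_neg.
  destruct (tang d V i) as [a b]; simpl in *.
  set (c := cos th). set (s := sin th).
  f_equal.
  - transitivity (c * b + s * a - 2 * c * b * (a*a+b*b)). rewrite Hu; ring. ring.
  - transitivity (- c * a + s * b + 2 * c * a * (a*a+b*b)). rewrite Hu; ring. ring.
Qed.

Lemma vne d V i : simple_polygon d V -> (i < d)%nat -> V i <> V (nxt d i).
Proof. intros [_ [H _]] Hi. auto. Qed.

Lemma Phi_det d V p q1 q2 : simple_polygon d V -> Phi d V p q1 -> Phi d V p q2 -> q1 = q2.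
Proof.
  intros HP [i1 [j1 [t1 [Hi1 [Hr1 [Hj1 [Ht1 [Hp1 [Hf1 [Hr1' Hd1]]]]]]]]]]
             [i2 [j2 [t2 [Hi2 [Hr2 [Hj2 [Ht2 [Hp2 [Hf2 [Hr2' Hd2]]]]]]]]]].
  pose proof (side_of_unique _ _ _ _ _ Hi1 Hi2); subst i2.
  assert (Ht : t1 = t2).
  { destruct (Rtotal_order t1 t2) as [h|[h|h]]; auto; exfalso.
    - apply (Hf2 t1); [lra|]. rewrite <- Hp1. apply pos_on; auto.
    - apply (Hf1 t2); [lra|]. rewrite <- Hp2. apply pos_on; auto. }
  subst t2. rewrite <- Hp2 in Hp1.
  assert (Hj : j1 = j2).
  { destruct (Nat.eq_dec j1 j2) as [e|ne]; auto. exfalso.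
    pose proof Hj1 as [Hjd1 _]. pose proof Hj2 as [Hjd2 _].
    destruct (pos_not_vertex d V j1 (fst q1) (vne d V j1 HP Hjd1) Hj1) as [N1 N1'].
    destruct (pos_not_vertex d V j2 (fst q2) (vne d V j2 HP Hjd2) Hj2) as [N2 N2'].
    pose proof (pos_on d V j1 (fst q1) Hj1) as [k1 [Hk1 S1]].
    pose proof (pos_on d V j2 (fst q2) Hj2) as [k2 [Hk2 S2]].
    destruct HP as [_ [_ [_ [Hs _]]]].
    assert (A1 : side_seg d V j1 (pos d V j1 (fst q1))).
    { unfold side_seg, seg, pos. exists ((fst q1 - sigma d V j1) / side_len d V j1).
      split; [pose proof (u_range d V j1 (fst q1) Hj1); lra | reflexivity]. }
    assert (A2 : side_seg d V j2 (pos d V j1 (fst q1))).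
    { rewrite Hp1. unfold side_seg, seg, pos. exists ((fst q2 - sigma d V j2) / side_len d V j2).
      split; [pose proof (u_range d V j2 (fst q2) Hj2); lra | reflexivity]. }
    destruct (Hs j1 j2 _ Hjd1 Hjd2 ne A1 A2) as [[_ E]|[_ E]].
    - rewrite Hp1 in E. auto.
    - auto. }
  subst j2.
  pose proof Hj1 as [Hjd _].
  pose proof (pos_inj d V j1 _ _ (vne d V j1 HP Hjd) Hj1 Hj2 Hp1).
  rewrite <- Hd2 in Hd1.
  pose proof (dirv_inj d V j1 _ _ (vne d V j1 HP Hjd) Hr1' Hr2' Hd1).
  destruct q1, q2; simpl in *; subst; reflexivity.
Qed.

Lemma Phi_rev d V p q : simple_polygon d V -> Phi d V p q ->
  Phi d V (fst q, - snd q) (fst p, - snd p).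
Proof.
  intros HP [i [j [t [Hi [Hr [Hj [Ht [Hp [Hf [Hr' Hd]]]]]]]]]].
  pose proof Hi as [Hid _]. pose proof Hj as [Hjd _].
  pose proof (revA d V j _ _ (vne d V j HP Hjd) Hd) as HA.
  exists j, i, t. simpl. split; [auto|]. split; [lra|]. split; [auto|]. split; [auto|].
  split; [|split; [|split; [lra|]]].
  - rewrite HA, Hp. destruct (pos d V i (fst p)), (dirv d V i (snd p)). unfold vadd, vscal. simpl. f_equal; ring.
  - intros t' Ht' Hb. apply (Hf (t - t')); [lra|].
    replace (vadd (pos d V i (fst p)) (vscal (t - t') (dirv d V i (snd p))))
      with (vadd (pos d V j (fst q)) (vscal t' (dirv d V j (- snd q)))); auto.
    rewrite HA, Hp. destruct (pos d V i (fst p)), (dirv d V i (snd p)). unfold vadd, vscal. simpl. f_equal; ring.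
  - rewrite HA. apply revB. apply vne; auto.
Qed.

Section Orb.
Variable F : pt -> pt -> Prop.
Hypothesis Fdet : forall a b c, F a b -> F a c -> b = c.

Lemma orbit_unique p o1 o2 : is_orbit F p o1 -> is_orbit F p o2 -> forall k, o1 k = o2 k.
Proof.
  intros [H0 H1] [G0 G1]. induction k. congruence.
  apply (Fdet (o1 k)); auto. rewrite IHk; auto.
Qed.

Lemma orbit_per p o : is_orbit F p o -> periodic F p ->
  exists N, (0 < N)%nat /\ forall k, o (k + N)%nat = o k.
Proof.
  intros Ho [o1 [Ho1 [N [HN E]]]]. exists N; split; auto.
  assert (Hsh : is_orbit F p (fun k => o (k + N)%nat)).
  { split. simpl. rewrite (orbit_unique p o o1 Ho Ho1). auto.
    intro k. replace (S k + N)%nat with (S (k + N)) by lia. apply Ho. }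
  intro k. exact (orbit_unique p _ _ Hsh Ho k).
Qed.
End Orb.

Lemma per_mult (o : nat -> pt) N : (forall k, o (k + N)%nat = o k) ->
  forall j k, o (k + j * N)%nat = o k.
Proof.
  intros H j. induction j; intro k. rewrite Nat.add_0_r; auto.
  replace (k + S j * N)%nat with ((k + j * N) + N)%nat by lia. rewrite H. auto.
Qed.

Lemma rev_orbit (F G : pt -> pt -> Prop) (T : pt -> pt) (o : nat -> pt) M :
  (0 < M)%nat -> (forall k, o (k + M)%nat = o k) -> (forall k, F (o k) (o (S k))) ->
  (forall a b, F a b -> G (T b) (T a)) ->
  is_orbit G (T (o O)) (fun k => T (o (M + k * (M - 1))%nat)) /\
  (fun k => T (o (M + k * (M - 1))%nat)) M = T (o O).
Proof.
  intros HM Hp Ho HFG. split; [split|].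
  - cbv beta. replace (M + 0 * (M - 1))%nat with (0 + M)%nat by lia. rewrite Hp. auto.
  - intro k. cbv beta.
    set (m := (M + k * (M - 1) - 1)%nat).
    replace (M + k * (M - 1))%nat with (S m) by (unfold m; lia).
    replace (M + S k * (M - 1))%nat with (m + M)%nat by (unfold m; lia).
    rewrite Hp. apply HFG. apply Ho.
  - cbv beta. replace (M + M * (M - 1))%nat with (0 + M * M)%nat by nia.
    rewrite (per_mult o M Hp M 0). reflexivity.
Qed.

Definition Sp (a : pt) : pt := (fst a, - snd a).
Definition Tl (l : R) (a : pt) : pt := (fst a, - snd a / l).

Lemma Phi_lam_det d V l a b c : simple_polygon d V -> Phi_lam d V l a b -> Phi_lam d V l a c -> b = c.
Proof.
  intros HP [q1 [H1 E1]] [q2 [H2 E2]]. rewrite (Phi_det d V a q1 q2 HP H1 H2) in E1. congruence.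
Qed.

Lemma Phi_lam_rev d V l a b : simple_polygon d V -> 0 < l -> Phi_lam d V l a b ->
  Phi_lam d V (/ l) (Tl l b) (Tl l a).
Proof.
  intros HP Hl [q [H E]]. subst b. unfold Tl; simpl.
  exists (fst a, - snd a). split.
  - replace (- (l * snd q) / l) with (- snd q) by (field; lra). apply Phi_rev; auto.
  - simpl. f_equal. field. lra.
Qed.

Lemma transfer_n d V p l qn : simple_polygon d V -> 0 < l -> periodic (Phi d V) p ->
  periodic (Phi_lam d V l) qn ->
  (exists o o', is_orbit (Phi d V) p o /\ is_orbit (Phi_lam d V l) qn o' /\ same_itin d V o o') ->
  periodic (Phi d V) (Sp p) /\ periodic (Phi_lam d V (/ l)) (Tl l qn) /\
  exists o o', is_orbit (Phi d V) (Sp p) o /\ is_orbit (Phi_lam d V (/ l)) (Tl l qn) o' /\ same_itin d V o o'.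
Proof.
  intros HP Hl Hpp Hpq [o [o' [Ho [Ho' Hit]]]].
  destruct (orbit_per _ (fun a b c => Phi_det d V a b c HP) p o Ho Hpp) as [N [HN Po]].
  destruct (orbit_per _ (fun a b c => Phi_lam_det d V l a b c HP) qn o' Ho' Hpq) as [N2 [HN2 Po']].
  set (M := (N * N2)%nat).
  assert (HM : (0 < M)%nat) by (unfold M; nia).
  assert (PM : forall k, o (k + M)%nat = o k).
  { intro k. unfold M. rewrite Nat.mul_comm. apply per_mult; auto. }
  assert (PM' : forall k, o' (k + M)%nat = o' k).
  { intro k. unfold M. apply per_mult; auto. }
  destruct Ho as [Ho0 Ho1]. destruct Ho' as [Ho0' Ho1'].
  destruct (rev_orbit (Phi d V) (Phi d V) Sp o M HM PM Ho1 (fun a b h => Phi_rev d V a b HP h)) as [R1 R1'].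
  destruct (rev_orbit (Phi_lam d V l) (Phi_lam d V (/ l)) (Tl l) o' M HM PM' Ho1'
     (fun a b h => Phi_lam_rev d V l a b HP Hl h)) as [R2 R2'].
  rewrite Ho0 in R1, R1'. rewrite Ho0' in R2, R2'.
  split; [|split].
  - exists (fun k => Sp (o (M + k * (M - 1))%nat)). split; auto. exists M; auto.
  - exists (fun k => Tl l (o' (M + k * (M - 1))%nat)). split; auto. exists M; auto.
  - exists (fun k => Sp (o (M + k * (M - 1))%nat)), (fun k => Tl l (o' (M + k * (M - 1))%nat)).
    split; auto. split; auto. intros k i. unfold Sp, Tl; simpl. apply Hit.
Qed.

Lemma cv_inv (lam : nat -> R) : Un_cv lam 1 -> Un_cv (fun n => / lam n) 1.
Proof.
  intro H. assert (C : continuity_pt (fun x => / x) 1).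
  { change (continuity_pt (/ id)%F 1). apply continuity_pt_inv.
    apply derivable_continuous_pt, derivable_pt_id. unfold id; lra. }
  pose proof (continuity_seq _ _ _ C H) as R. cbv beta in R; rewrite Rinv_1 in R. exact R.
Qed.

Lemma cv_snd (lam : nat -> R) (q : nat -> pt) (p : pt) : Un_cv lam 1 ->
  Un_cv (fun n => snd (q n)) (snd p) ->
  Un_cv (fun n => snd (Tl (lam n) (q n))) (snd (Sp p)).
Proof.
  intros Hl Hs. pose proof (CV_mult _ _ _ _ (CV_opp _ _ Hs) (cv_inv lam Hl)) as H.
  rewrite Rmult_1_r in H. exact H.
Qed.

Lemma minus_to_plus d V p : simple_polygon d V -> lam_minus_stable_pt d V p -> lam_plus_stable_pt d V (Sp p).
Proof.
  intros HP [Hper [lam [q [Hm [Hpos [Hl [Hf [Hs Hn]]]]]]]].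
  destruct (Hn O) as [Hq0 Hx0].
  destruct (transfer_n d V p (lam O) (q O) HP (Hpos O) Hper Hq0 Hx0) as [HSp _].
  split; auto.
  exists (fun n => / lam n), (fun n => Tl (lam n) (q n)).
  split; [|split; [|split; [|split; [|split]]]].
  - intro n. apply Rinv_lt_contravar; auto. apply Rmult_lt_0_compat; auto.
  - intro n. apply Rinv_0_lt_compat; auto.
  - apply cv_inv; auto.
  - exact Hf.
  - apply cv_snd; auto.
  - intro n. destruct (Hn n) as [Hqn Hxn].
    destruct (transfer_n d V p (lam n) (q n) HP (Hpos n) Hper Hqn Hxn) as [_ [A B]]. auto.
Qed.

Lemma plus_to_minus d V p : simple_polygon d V -> lam_plus_stable_pt d V p -> lam_minus_stable_pt d V (Sp p).
Proof.
  intros HP [Hper [lam [q [Hm [Hpos [Hl [Hf [Hs Hn]]]]]]]].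
  destruct (Hn O) as [Hq0 Hx0].
  destruct (transfer_n d V p (lam O) (q O) HP (Hpos O) Hper Hq0 Hx0) as [HSp _].
  split; auto.
  exists (fun n => / lam n), (fun n => Tl (lam n) (q n)).
  split; [|split; [|split; [|split; [|split]]]].
  - intro n. apply Rinv_lt_contravar; auto. apply Rmult_lt_0_compat; auto.
  - intro n. apply Rinv_0_lt_compat; auto.
  - apply cv_inv; auto.
  - exact Hf.
  - apply cv_snd; auto.
  - intro n. destruct (Hn n) as [Hqn Hxn].
    destruct (transfer_n d V p (lam n) (q n) HP (Hpos n) Hper Hqn Hxn) as [_ [A B]]. auto.
Qed.

Theorem lemma2p6 (d : nat) (V : nat -> pt) (C : pt -> Prop)
  (HP : simple_polygon d V) (HC : is_periodic_cylinder d V C) :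
  cyl_minus_stable d V C <-> cyl_plus_stable d V (reversed C).
Proof.
  split.
  - intros [p [Cp Hp]]. exists (Sp p). split.
    + unfold reversed, Sp; simpl. rewrite Ropp_involutive. destruct p; exact Cp.
    + apply minus_to_plus; auto.
  - intros [p [Cp Hp]]. exists (Sp p). split.
    + exact Cp.
    + apply plus_to_minus; auto.
Qed.
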